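(* Let $E$ be a symmetric Banach function space on $[0,\alpha)$, $0<\alpha\le\infty$. If $E$ is strictly monotone then $E=E_0$.
   Context: $\mu(f)$ is the decreasing rearrangement of $f$, $\mu(\infty,f)=\lim_{t\to\infty}\mu(t,f)$, and $E_0=\{f\in E:\mu(\infty,f)=0\}$. $E$ is symmetric if $g\in E$, $\mu(f)\le\mu(g)$ imply $f\in E$ and $\|f\|_E\le\|g\|_E$. $E$ is strictly monotone if $0\le f\le g$, $f\ne g$ in $E$ imply $\|f\|_E<\|g\|_E$. *)

(* Defs.v *)
From mathcomp Require Import all_boot all_order all_algebra.
From mathcomp Require Import all_classical all_reals all_analysis.
Import Order.TTheory GRing.Theory Num.Theory.
Set Implicit Arguments. Unset Strict Implicit. Unset Printing Implicit Defensive.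
Local Open Scope classical_set_scope.
Local Open Scope ring_scope.

Definition dom0 (R : realType) (a : \bar R) : set R :=
  [set x | 0 <= x /\ (x%:E < a)%E].

Definition L0 (R : realType) (a : \bar R) (f : R -> R) : Prop :=
  measurable_fun (dom0 a) f.

Definition ae_on (R : realType) (a : \bar R) (P : R -> Prop) : Prop :=
  (@lebesgue_measure R).-negligible [set x | dom0 a x /\ ~ P x].

Definition distrib (R : realType) (a : \bar R) (f : R -> R) (s : R) : \bar R :=
  (@lebesgue_measure R) [set x | dom0 a x /\ s < `|f x|].

Definition mu (R : realType) (a : \bar R) (f : R -> R) (t : R) : \bar R :=
  ereal_inf [set s%:E | s in [set s : R | 0 <= s /\ (distrib a f s <= t%:E)%E]].

Definition mu_inf (R : realType) (a : \bar R) (f : R -> R) : \bar R :=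
  lim (mu a f t @[t --> +oo]).

(* (E, nrm) is a Banach function space on [0,a): a linear subspace of L0
   with a complete norm (functions equal a.e. identified), which is an ideal:
   g in L0, |g| <= |f| a.e., f in E  ==>  g in E and ||g|| <= ||f||. *)
Definition banach_function_space (R : realType) (a : \bar R)
    (E : set (R -> R)) (nrm : (R -> R) -> R) : Prop :=
  (forall f, E f -> L0 a f) /\
      E (fun _ => 0) /\
      (forall f g, E f -> E g -> E (f \+ g)) /\
      (forall (k : R) f, E f -> E (fun x => k * f x)) /\
      (forall f, E f -> 0 <= nrm f /\ (nrm f = 0 <-> ae_on a (fun x => f x = 0))) /\
      (forall (k : R) f, E f -> nrm (fun x => k * f x) = `|k| * nrm f) /\
      (forall f g, E f -> E g -> nrm (f \+ g) <= nrm f + nrm g) /\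
      (forall f g, E f -> L0 a g -> ae_on a (fun x => `|g x| <= `|f x|) ->
          E g /\ nrm g <= nrm f) /\
      (forall u : nat -> R -> R, (forall n, E (u n)) ->
         (forall e : R, 0 < e -> exists N : nat, forall m n : nat,
             (N <= m)%N -> (N <= n)%N -> nrm (u m \- u n) < e) ->
         exists f, E f /\ (nrm (u n \- f) @[n --> \oo] --> 0)).

Definition symmetric_space (R : realType) (a : \bar R)
    (E : set (R -> R)) (nrm : (R -> R) -> R) : Prop :=
  forall f g, E g -> L0 a f -> (forall t : R, 0 < t -> (mu a f t <= mu a g t)%E) ->
    E f /\ nrm f <= nrm g.

Definition strictly_monotone (R : realType) (a : \bar R)
    (E : set (R -> R)) (nrm : (R -> R) -> R) : Prop :=
  forall f g, E f -> E g ->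
    ae_on a (fun x => 0 <= f x /\ f x <= g x) ->
    ~ ae_on a (fun x => f x = g x) ->
    nrm f < nrm g.

Definition E0 (R : realType) (a : \bar R) (E : set (R -> R)) : set (R -> R) :=
  [set f | E f /\ mu_inf a f = 0%E].

(* Main.v *)
Require Import Defs.
From mathcomp Require Import all_boot all_order all_algebra.
From mathcomp Require Import all_classical all_reals all_analysis.
Import Order.TTheory GRing.Theory Num.Theory.
Local Open Scope classical_set_scope.
Local Open Scope ring_scope.

Section H.
Variables (R : realType) (a : \bar R).

Lemma mu_ge0 f t : (0 <= mu a f t)%E.
Proof. apply: le_ereal_inf_tmp => _ [s [s0 _] <-]; by rewrite lee_fin. Qed.

Lemma mu_noninc f t t' : t <= t' -> (mu a f t' <= mu a f t)%E.
Proof.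
move=> tt'; apply: ereal_inf_le_tmp => _ [s [s0 hs] <-]; exists s => //; split => //.
by apply: (le_trans hs); rewrite lee_fin.
Qed.

Lemma mu_le f t s : 0 <= s -> (distrib a f s <= t%:E)%E -> (mu a f t <= s%:E)%E.
Proof. move=> s0 hs; apply: ge_ereal_inf; exists s%:E => //; by exists s. Qed.

Lemma mu_ge f t e : (forall s, 0 <= s -> (distrib a f s <= t%:E)%E -> e <= s) ->
  (e%:E <= mu a f t)%E.
Proof. move=> H; apply: le_ereal_inf_tmp => _ [s [s0 hs] <-]; rewrite lee_fin; exact: H. Qed.

End H.
Section H2.
Variable R : realType.

Lemma ae_all (a : \bar R) (P : R -> Prop) : (forall x, P x) -> ae_on a P.
Proof.
move=> HP; exists set0; split => //.
by move=> x [_ /(_ (HP x))].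
Qed.

Lemma dom0_fin (r : R) : dom0 r%:E = `[0, r[%classic.
Proof.
apply/seteqP; split => x /=; rewrite /dom0 /= in_itv /= ?lte_fin.
  by case=> -> ->.
by case/andP => -> ->.
Qed.

Lemma dom0_inf : dom0 (+oo%E : \bar R) = `[0, +oo[%classic.
Proof.
apply/seteqP; split => x /=; rewrite /dom0 /= in_itv /= andbT.
  by case=> ->.
by move=> ->; split => //; exact: ltry.
Qed.

Lemma leb_itv01 : (@lebesgue_measure R) `[0, 1[%classic = 1%E.
Proof. by rewrite lebesgue_measure_itv /= lte_fin ltr01 oppr0 adde0. Qed.

Lemma leb_itv1y : (@lebesgue_measure R) `[1, +oo[%classic = +oo%E.
Proof. by rewrite lebesgue_measure_itv /= ltry. Qed.
End H2.

Section K.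
Variables (R : realType).

Lemma key_inf (E : set (R -> R)) nrm :
  banach_function_space +oo%E E nrm -> symmetric_space +oo%E E nrm ->
  strictly_monotone +oo%E E nrm ->
  forall f, E f -> forall e : R, 0 < e -> ~ (forall t, (e%:E <= mu +oo%E f t)%E).
Proof.
move=> [_ [_ [_ [_ [_ [_ [_ [Hid _]]]]]]]] Hsym Hsm f Ef e e0 Hf.
pose A : set R := `[1, +oo[%classic.
pose h : R -> R := fun _ => e.
pose g : R -> R := fun x => e * \1_A x.
have Lh : L0 +oo%E h by rewrite /L0; exact: measurable_cst.
have Lg : L0 +oo%E g.
  rewrite /L0; apply: measurable_realfun.measurable_funM; first exact: measurable_cst.
  by apply: measurable_realfun.measurable_indic; exact: measurable_itv.
have muh : forall t, 0 < t -> (mu +oo%E h t <= e%:E)%E.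
  move=> t t0; apply: mu_le; first exact: ltW.
  rewrite /distrib.
  have -> : [set x | dom0 +oo%E x /\ e < `|h x|] = set0.
    by apply/seteqP; split => x //= [_]; rewrite /h gtr0_norm // ltxx.
  by rewrite measure0 lee_fin ltW.
have mug : forall t, (e%:E <= mu +oo%E g t)%E.
  move=> t; apply: mu_ge => s s0 hs; rewrite leNgt; apply/negP => se.
  move: hs; rewrite /distrib.
  have -> : [set x | dom0 +oo%E x /\ s < `|g x|] = A.
    apply/seteqP; split => x /=.
      move=> [_]; rewrite /g indicE; case: (boolP (x \in A)) => [/set_mem //|_].
      by rewrite mulr0 normr0 ltNge s0.
    move=> Ax; have xA : x \in A by apply/mem_set.
    rewrite /g indicE xA mulr1 gtr0_norm //; split => //.
    move: Ax; rewrite /A /= in_itv /= andbT => x1.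
    split; [exact: le_trans ler01 x1 | exact: ltry].
  by rewrite leb_itv1y.
have Eh : E h /\ nrm h <= nrm f.
  apply: Hsym => // t t0; exact: le_trans (muh t t0) (Hf t).
have Eg : E g /\ nrm g <= nrm h.
  apply: Hid => //; first by case: Eh.
  apply: ae_all => x; rewrite /g /h indicE; case: (x \in A); rewrite ?mulr1 ?mulr0 //.
  by rewrite normr0 normr_ge0.
have Hhg : nrm h <= nrm g.
  by case: (Hsym h g (proj1 Eg) Lh) => // t t0; exact: le_trans (muh t t0) (mug t).
have : nrm g < nrm h.
  apply: Hsm; [by case: Eg | by case: Eh | |].
    apply: ae_all => x; rewrite /g /h indicE.
    by case: (x \in A); rewrite ?mulr1 ?mulr0; split; rewrite ?lexx ?(ltW e0).
  move=> [N [mN N0 sN]].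
  have : (lebesgue_measure (`[0%R, 1%R[%classic : set R) <= lebesgue_measure N)%E.
    apply: le_measure => //; [rewrite inE; exact: measurable_itv | by rewrite inE |].
    move=> x /=; rewrite in_itv /= => /andP [x0 x1]; apply: sN; split.
      by split => //; exact: ltry.
    rewrite /g /h indicE.
    have -> : (x \in A) = false.
      apply/negbTE/negP => /set_mem; rewrite /A /= in_itv /= andbT.
      by rewrite leNgt x1.
    by rewrite mulr0 => /esym; apply/eqP; rewrite gt_eqF.
  by rewrite N0 leb_itv01 lee_fin ler10.
by rewrite ltNge Hhg.
Qed.
End K.

Section K2.
Variables (R : realType).

Lemma key_fin (r : R) (r0 : 0 < r) (E : set (R -> R)) nrm :
  banach_function_space r%:E E nrm ->
  forall f, E f -> forall e : R, 0 < e -> ~ (forall t, (e%:E <= mu r%:E f t)%E).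
Proof.
move=> [HL _] f Ef e e0 Hf.
have Lf := HL f Ef.
have md : measurable (dom0 r%:E) by rewrite dom0_fin; exact: measurable_itv.
have : (mu r%:E f r <= 0%:E)%E.
  apply: mu_le => //; rewrite /distrib.
  have -> : [set x | dom0 r%:E x /\ 0 < `|f x|] = dom0 r%:E `&` f @^-1` (~` [set 0]).
    apply/seteqP; split => x /= [dx hx]; split => //.
      by move=> fx0; move: hx; rewrite fx0 normr0 ltxx.
    by rewrite normr_gt0; apply/eqP.
  apply: (@le_trans _ _ (lebesgue_measure (`[0%R, r[%classic : set R))).
    apply: le_measure; rewrite ?inE.
    - by apply: Lf => //; apply: measurableC; exact: measurable_set1.
    - exact: measurable_itv.
    - by rewrite -dom0_fin => x [].
  rewrite lebesgue_measure_itv /=.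
  case: ifP => _; last by rewrite lee_fin ltW.
  by rewrite oppr0 adde0.
move/(le_trans (Hf r)); by rewrite lee_fin leNgt e0.
Qed.
End K2.

Theorem mainTheorem12 (R : realType) (a : \bar R) (ha : (0 < a)%E)
    (E : set (R -> R)) (nrm : (R -> R) -> R) :
  banach_function_space a E nrm ->
  symmetric_space a E nrm ->
  strictly_monotone a E nrm ->
  E = E0 a E.
Proof.
move=> BFS Hsym Hsm.
have key : forall f, E f -> forall e : R, 0 < e -> exists T, (mu a f T < e%:E)%E.
  move=> f Ef e e0; case: (pselect (exists T, (mu a f T < e%:E)%E)) => // nH; exfalso.
  have Hf : forall t, (e%:E <= mu a f t)%E.
    by move=> t; rewrite leNgt; apply/negP => ht; apply: nH; exists t.
  clear nH; move: ha BFS Hsym Hsm Hf; case: a => [r||] ha' BFS' Hsym' Hsm' Hf'.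
  - have r0 : 0 < r by rewrite -lte_fin.
    exact: (@key_fin R r r0 E nrm BFS' f Ef e e0 Hf').
  - exact: (@key_inf R E nrm BFS' Hsym' Hsm' f Ef e e0 Hf').
  - by rewrite ltNge leNye in ha'.
apply/seteqP; split => f; last by case.
move=> Ef; split => //.
rewrite /mu_inf; apply: cvg_lim => //.
have fin : forall t T, (mu a f T < 1%:E)%E -> T < t -> mu a f t \is a fin_num.
  move=> t T hT Tt; rewrite ge0_fin_numE; last exact: (@mu_ge0 R a f t).
  exact: lt_trans (le_lt_trans (@mu_noninc R a f _ _ (ltW Tt)) hT) (ltry _).
apply/fine_cvgP; split.
  case: (key f Ef 1 ltr01) => T hT.
  exists T; split; first exact: num_real.
  by move=> t Tt; exact: fin t T hT Tt.
apply/cvgrPdist_lt => eps eps0.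
case: (key f Ef 1 ltr01) => T1 hT1.
case: (key f Ef eps eps0) => T hT.
exists (Num.max T T1); split; first exact: num_real.
move=> t; rewrite gt_max => /andP [Tt T1t].
have h1 := @mu_ge0 R a f t; have h2 := le_lt_trans (@mu_noninc R a f _ _ (ltW Tt)) hT.
have ft := fin t T1 hT1 T1t.
rewrite -(fineK ft) lee_fin in h1; rewrite -(fineK ft) lte_fin in h2.
by rewrite /= sub0r normrN ger0_norm.
Qed.
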